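(* Let $B$ be a finite set of spins and let $w_{i,j}=w_{j,i}\ge 0$ (for distinct $i,j\in B$) be interaction strengths. For a cluster $\mathcal S\subseteq B$ with $|\mathcal S|\ge 2$, define its heuristic strength $s(\mathcal S)$ as the largest value $s\in\{w_{i,j}: i,j\in\mathcal S, i\ne j\}$ such that the graph on vertex set $\mathcal S$ with edges $\{\{i,j\}: i,j\in\mathcal S,\ w_{i,j}\ge s\}$ is connected (equivalently, the smallest interaction necessary to complete the connectivity of $\mathcal S$ when interactions among its spins are added in order of decreasing strength); for $|\mathcal S|=1$ set $s(\mathcal S)=+\infty$. Then for any cluster $\mathcal S$ with $|\mathcal S|\ge 2$ and any spin $i\in\mathcal S$, there exists a sub-cluster $\mathcal C\subseteq\mathcal S$ with $i\in\mathcal C$, $|\mathcal C|=|\mathcal S|-1$, and $s(\mathcal C)\ge s(\mathcal S)$.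
   Context: Clusters are arbitrary subsets of spins; ''sub-cluster'' means subset. *)

(* Defs.v *)
From HB Require Import structures.
From mathcomp Require Import all_boot all_order all_algebra.
Set Implicit Arguments. Unset Strict Implicit. Unset Printing Implicit Defensive.
Import Order.TTheory GRing.Theory Num.Theory.
Local Open Scope ring_scope.

Section Strength.
Variables (R : realFieldType) (B : finType) (w : B -> B -> R).

Definition thr_edge (S : {set B}) (s : R) : rel B :=
  fun i j => [&& i \in S, j \in S, i != j & s <= w i j].

Definition thr_connected (S : {set B}) (s : R) : bool :=
  [forall i in S, forall j in S, connect (thr_edge S s) i j].

Definition int_values (S : {set B}) : seq R :=
  [seq w p.1 p.2 | p <- enum (setX S S) & p.1 != p.2].

Definition good_values (S : {set B}) : seq R :=
  [seq s <- int_values S | thr_connected S s].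

(* Heuristic strength, with None standing for +infinity (|S| <= 1):
   the largest good value. *)
Definition strength (S : {set B}) : option R :=
  if (#|S| <= 1)%N then None
  else Some (foldr Num.max (head 0 (good_values S)) (good_values S)).

End Strength.

Definition ge_ext (R : realFieldType) (a b : option R) : bool :=
  match a, b with
  | None, _ => true
  | Some _, None => false
  | Some x, Some y => y <= x
  end.

(* Main.v *)
Require Import Defs.
From mathcomp Require Import all_boot all_order all_algebra.
Set Implicit Arguments. Unset Strict Implicit. Unset Printing Implicit Defensive.
Import Order.TTheory GRing.Theory Num.Theory.
Definition rest (T : finType) (U : {set T}) (e : rel T) : rel T :=
  fun x y => [&& x \in U, y \in U & e x y].

Section NC.
Variables (T : finType) (e : rel T) (V : {set T}) (i : T).
Hypothesis esym : symmetric e.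
Hypothesis iV : i \in V.
Hypothesis V2 : (2 <= #|V|)%N.
Hypothesis Vc : forall y, y \in V -> connect (rest V e) i y.

Fixpoint reach n y : bool :=
  if n is n'.+1 then reach n' y || [exists z, reach n' z && rest V e z y]
  else y == i.

Lemma reach_path p x m : path (rest V e) x p -> reach m x ->
  reach (m + size p) (last x p).
Proof.
elim: p x m => [|a p IH] x m /=; first by rewrite addn0.
move=> /andP[ex pp] rx; rewrite addnS -addSn; apply: IH => //=.
by apply/orP; right; apply/existsP; exists x; rewrite rx.
Qed.

Lemma exQ y : exists n, reach n y || ~~ connect (rest V e) i y.
Proof.
case c: (connect (rest V e) i y); last by exists 0; rewrite orbT.
have [p pp ey] := connectP c; exists (size p).
have := @reach_path p i 0 pp; rewrite add0n /= eqxx -ey => ->; by [].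
Qed.

Definition d y := ex_minn (exQ y).

Lemma dP y : y \in V -> reach (d y) y /\ forall n, reach n y -> (d y <= n)%N.
Proof.
move=> yV; rewrite /d; case: ex_minnP => n; rewrite Vc // orbF => rn mn.
by split => // m rm; apply: mn; rewrite rm.
Qed.

Lemma noncut : exists j, [/\ j \in V, j != i &
  forall y, y \in V :\ j -> connect (rest (V :\ j) e) i y].
Proof.
have [y0 y0V] : {y0 | y0 \in V :\ i}.
  case: (pickP (mem (V :\ i))) => [y0 Hy|H]; first by exists y0.
  by move: V2; rewrite (cardsD1 i V) iV (eq_card0 H).
case: (@arg_maxnP _ y0 (mem (V :\ i)) d y0V) => j jV jmax.
exists j; move: jV; rewrite !inE => /andP[ji jV]; split => //.
have dj : forall y, y \in V -> (d y <= d j)%N.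
  move=> y yV; case: (eqVneq y i) => [->|yi].
    by have [_ m] := dP iV; apply: leq_trans (m 0 (eqxx i)) _.
  by apply: jmax; rewrite !inE yi.
suff H : forall n y, y \in V -> y != j -> d y = n -> connect (rest (V :\ j) e) i y.
  by move=> y; rewrite !inE => /andP[yj yV]; apply: (H _ y).
elim => [|n IH] y yV yj dy.
  by have [r _] := dP yV; move: r; rewrite dy /= => /eqP ->.
have [r m] := dP yV; move: r; rewrite dy /= => /orP[r|].
  by have := m _ r; rewrite dy ltnn.
move=> /existsP[z /andP[rz ezy]].
have zV : z \in V by case/and3P: ezy.
have [rz' mz] := dP zV.
have dzn : (d z <= n)%N := mz _ rz.
have ndz : (n.+1 <= (d z).+1)%N.
  rewrite -dy; apply: m => /=; apply/orP; right; apply/existsP; exists z.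
  by rewrite rz' ezy.
have dze : d z = n by apply/eqP; rewrite eqn_leq dzn -ltnS.
have zj : z != j.
  by apply/eqP => zj; have := dj _ yV; rewrite dy -zj dze ltnn.
apply: connect_trans (IH z zV zj dze) (connect1 _).
by case/and3P: ezy => _ _ ezy; rewrite /rest !in_setD1 zj yj zV yV ezy.
Qed.
End NC.

Local Open Scope ring_scope.

Lemma foldr_max_mem (R : realFieldType) (l : seq R) a :
  foldr Num.max a l \in a :: l.
Proof.
elim: l => [|x l IH] /=; first by rewrite inE.
rewrite /Num.max; case: ifP => _; first by move: IH; rewrite !inE => /orP[->|->]; rewrite ?orbT.
by rewrite !inE eqxx orbT.
Qed.

Lemma foldr_max_head (R : realFieldType) (l : seq R) :
  foldr Num.max (head 0 l) l \in l \/ foldr Num.max (head 0 l) l = 0.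
Proof.
move: (foldr_max_mem l (head 0 l)).
case: l => [|a l] /=; first by rewrite inE => /eqP; right.
by rewrite !inE => /orP[/eqP->|]; left; rewrite ?inE ?eqxx.
Qed.

Lemma foldr_max_ge (R : realFieldType) (l : seq R) a x :
  x \in l -> x <= foldr Num.max a l.
Proof.
elim: l => [|y l IH] //=; rewrite inE => /orP[/eqP->|xl].
  by rewrite le_max lexx.
by rewrite le_max IH ?orbT.
Qed.

Theorem theorem2 (R : realFieldType) (B : finType) (w : B -> B -> R)
  (w_sym : forall i j : B, i != j -> w i j = w j i)
  (w_ge0 : forall i j : B, i != j -> 0 <= w i j)
  (S : {set B}) (hS : (2 <= #|S|)%N) (i : B) (hi : i \in S) :
  exists C : {set B},
    [/\ C \subset S, i \in C, #|C| = (#|S| - 1)%N &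
        ge_ext (strength w C) (strength w S)].
Proof.
case: (leqP #|S| 2) => S2.
  exists [set i]; split; first by rewrite sub1set.
  - by rewrite inE.
  - have -> : #|S| = 2%N by apply/eqP; rewrite eqn_leq S2 hS.
    by rewrite cards1.
  - by rewrite /strength cards1.
set g := good_values w S.
set ss := foldr Num.max (head 0 g) g.
have hsS : strength w S = Some ss by rewrite /strength ifN // -ltnNge.
have conn : thr_connected w S ss.
  have : ss \in g \/ ss = 0.
    exact: foldr_max_head.
  case=> [|->]; first by rewrite mem_filter => /andP[].
  apply/forall_inP => x xS; apply/forall_inP => y yS.
  case: (eqVneq x y) => [->|xy]; first exact: connect0.
  by apply: connect1; rewrite /thr_edge xS yS xy w_ge0.
pose e0 := fun x y : B => (x != y) && (ss <= w x y).
have esym : symmetric e0.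
  move=> x y; rewrite /e0 eq_sym; case: (eqVneq y x) => //= yx.
  by rewrite w_sym // eq_sym.
have Vc : forall y, y \in S -> connect (rest S e0) i y.
  move=> y yS; move/forall_inP: conn => /(_ i hi) /forall_inP /(_ y yS).
  by [].
have S2' : (2 <= #|S|)%N by [].
have [j [jS ji Cc]] := noncut hi S2' Vc.
set C := S :\ j.
have iC : i \in C by rewrite !inE eq_sym ji hi.
have cC : #|C| = (#|S| - 1)%N by rewrite (cardsD1 j S) jS add1n subSS subn0.
exists C; split => //; first exact: subsetDl.
have C2 : (2 <= #|C|)%N by rewrite cC ltn_subRL.
rewrite hsS /strength ifN -?ltnNge //=.
have rsym : symmetric (rest C e0).
  by move=> x y; rewrite /rest esym andbCA andbA andbC -!andbA.
have Cconn : forall x y, x \in C -> y \in C -> connect (rest C e0) x y.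
  move=> x y xC yC; apply: connect_trans (Cc y yC).
  by rewrite (sym_connect_sym rsym); apply: Cc.
have [b bC] : {b | b \in C :\ i}.
  case: (pickP (mem (C :\ i))) => [b Hb|H]; first by exists b.
  by move: C2; rewrite (cardsD1 i C) iC (eq_card0 H).
have [x0 ex0] : exists x0, rest C e0 i x0.
  have := Cc b; move: bC; rewrite in_setD1 => /andP[bi bC'].
  move=> /(_ bC') /connectP [[|x p] /= pp eb]; first by move: bi; rewrite eb eqxx.
  by exists x; case/andP: pp.
pose P := [pred q : B * B | [&& q.1 \in C, q.2 \in C, q.1 != q.2 & ss <= w q.1 q.2]].
have Pp0 : P (i, x0) by [].
have [q Pq qmin] := arg_minP (fun q : B * B => w q.1 q.2) Pp0.
set t := w q.1 q.2.
have [q1C [q2C [q12 sst]]] : [/\ q.1 \in C, q.2 \in C, q.1 != q.2 & ss <= t].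
  by case/and4P: Pq.
have eqr : thr_edge w C t =2 rest C e0.
  move=> x y; rewrite /thr_edge /rest /e0.
  case xC: (x \in C); case yC: (y \in C); case: (eqVneq x y) => //= xy.
  apply/idP/idP => [h|h]; first exact: le_trans h.
  by apply: (qmin (x, y)); rewrite /P /= xC yC xy h.
have tint : t \in int_values w C.
  apply/mapP; exists q => //; move: q1C q2C q12; case: (q) => q1 q2 /= q1C q2C q12; rewrite mem_filter q12 mem_enum in_setX q1C q2C.
  by [].
have tgood : t \in good_values w C.
  rewrite mem_filter tint andbT.
  apply/forall_inP => x xC; apply/forall_inP => y yC.
  by rewrite (eq_connect eqr); apply: Cconn.
by apply: le_trans sst (foldr_max_ge _ tgood).
Qed.
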